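(* Let $\Gamma$ be a finitely generated group with finite symmetric generating set $S$, $\rho\colon\Gamma\curvearrowright\mathcal H$ an affine action on a Hilbert space and $f\colon\Gamma\to\mathcal H$ a $\rho$-equivariant map. Then for all $x\in\Gamma$, $$\|\Delta Hf(x)\|\le\max_{x'\in x(S\cup\{e\})}\|\Delta f(x')\|,$$ and if equality holds for some $x$, then $\Delta f$ is a constant vector independent of $x\in\Gamma$.
   Context: $f$ is $\rho$-equivariant if $f(\gamma x)=\rho(\gamma)(f(x))$ for all $\gamma,x$. Averaging operator: $Hf(x)=\frac12\big(\frac1{\#S}\sum_{s\in S}f(xs)+f(x)\big)$; Laplacian: $\Delta f=(1-H)f$, i.e. $\Delta f(x)=\frac1{2\#S}\sum_{s\in S}(f(x)-f(xs))$. $x(S\cup\{e\})=\{xs:s\in S\}\cup\{x\}$. *)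

(* Defs.v *)
From Stdlib Require Import Reals List.
Import ListNotations.
Open Scope R_scope.

Record HilbertSpace := {
  hcarrier :> Type;
  vadd : hcarrier -> hcarrier -> hcarrier;
  vzero : hcarrier;
  vopp : hcarrier -> hcarrier;
  vscal : R -> hcarrier -> hcarrier;
  inner : hcarrier -> hcarrier -> R;
  vadd_assoc : forall u v w, vadd u (vadd v w) = vadd (vadd u v) w;
  vadd_comm : forall u v, vadd u v = vadd v u;
  vadd_0 : forall u, vadd u vzero = u;
  vadd_opp : forall u, vadd u (vopp u) = vzero;
  vscal_distr_v : forall a u v, vscal a (vadd u v) = vadd (vscal a u) (vscal a v);
  vscal_distr_s : forall a b u, vscal (a + b) u = vadd (vscal a u) (vscal b u);
  vscal_assoc : forall a b u, vscal a (vscal b u) = vscal (a * b) u;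
  vscal_1 : forall u, vscal 1 u = u;
  inner_sym : forall u v, inner u v = inner v u;
  inner_add_l : forall u v w, inner (vadd u v) w = inner u w + inner v w;
  inner_scal_l : forall a u v, inner (vscal a u) v = a * inner u v;
  inner_pos : forall u, 0 <= inner u u;
  inner_def : forall u, inner u u = 0 -> u = vzero;
  complete : forall u : nat -> hcarrier,
    (forall eps, eps > 0 -> exists N, forall m n, (N <= m)%nat -> (N <= n)%nat ->
        sqrt (inner (vadd (u m) (vopp (u n))) (vadd (u m) (vopp (u n)))) < eps) ->
    exists l, forall eps, eps > 0 -> exists N, forall n, (N <= n)%nat ->
        sqrt (inner (vadd (u n) (vopp l)) (vadd (u n) (vopp l))) < eps
}.

Arguments vadd {_}. Arguments vzero {_}. Arguments vopp {_}.
Arguments vscal {_}. Arguments inner {_}.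

Definition vsub {V : HilbertSpace} (u v : V) : V := vadd u (vopp v).
Definition hnorm {V : HilbertSpace} (u : V) : R := sqrt (inner u u).

Definition vsum {V : HilbertSpace} {A : Type} (l : list A) (F : A -> V) : V :=
  fold_right (fun a acc => vadd (F a) acc) vzero l.

Definition is_linear {V : HilbertSpace} (L : V -> V) : Prop :=
  (forall u v, L (vadd u v) = vadd (L u) (L v)) /\
  (forall a u, L (vscal a u) = vscal a (L u)).

Definition is_affine {V : HilbertSpace} (A : V -> V) : Prop :=
  exists L b, is_linear L /\ forall v, A v = vadd (L v) b.

Definition is_group {G : Type} (mul : G -> G -> G) (inv : G -> G) (e : G) : Prop :=
  (forall x y z, mul x (mul y z) = mul (mul x y) z) /\
  (forall x, mul e x = x) /\ (forall x, mul x e = x) /\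
  (forall x, mul x (inv x) = e) /\ (forall x, mul (inv x) x = e).

Definition generates {G : Type} (mul : G -> G -> G) (inv : G -> G) (e : G)
  (S : list G) : Prop :=
  forall P : G -> Prop,
    P e -> (forall x y, P x -> P y -> P (mul x y)) -> (forall x, P x -> P (inv x)) ->
    (forall s, In s S -> P s) -> forall g, P g.

Definition fin_sym_gen_set {G : Type} (mul : G -> G -> G) (inv : G -> G) (e : G)
  (S : list G) : Prop :=
  NoDup S /\ S <> [] /\ (forall s, In s S -> In (inv s) S) /\ generates mul inv e S.

Definition is_affine_action {G : Type} (mul : G -> G -> G) (e : G)
  {V : HilbertSpace} (rho : G -> V -> V) : Prop :=
  (forall g, is_affine (rho g)) /\
  (forall v, rho e v = v) /\
  (forall g h v, rho (mul g h) v = rho g (rho h v)).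

Definition equivariant {G : Type} (mul : G -> G -> G) {V : HilbertSpace}
  (rho : G -> V -> V) (f : G -> V) : Prop :=
  forall g x, f (mul g x) = rho g (f x).

Definition Hop {G : Type} (mul : G -> G -> G) (S : list G) {V : HilbertSpace}
  (f : G -> V) : G -> V :=
  fun x => vscal (1/2)
    (vadd (vscal (1 / INR (length S)) (vsum S (fun s => f (mul x s)))) (f x)).

Definition Lap {G : Type} (mul : G -> G -> G) (S : list G) {V : HilbertSpace}
  (f : G -> V) : G -> V :=
  fun x => vsub (f x) (Hop mul S f x).

Definition max_nbhd {G : Type} (mul : G -> G -> G) (S : list G) (g : G -> R) (x : G) : R :=
  fold_right (fun s acc => Rmax (g (mul x s)) acc) (g x) S.

(* Main.v *)
Require Import Defs.
From Stdlib Require Import Reals List Lra FunctionalExtensionality.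
Open Scope R_scope.

Section Vec.
Variable V : HilbertSpace.
Implicit Types u v w a b c d p q : V.

Lemma vadd_0_l u : vadd vzero u = u.
Proof. rewrite vadd_comm; apply vadd_0. Qed.

Lemma vadd_cancel_r u v w : vadd u w = vadd v w -> u = v.
Proof.
  intro H. rewrite <- (vadd_0 _ u), <- (vadd_0 _ v), <- (vadd_opp _ w), !vadd_assoc, H.
  reflexivity.
Qed.

Lemma vscal_0 u : vscal 0 u = vzero.
Proof.
  apply (vadd_cancel_r _ _ (vscal 0 u)). rewrite <- vscal_distr_s, Rplus_0_l, vadd_0_l.
  reflexivity.
Qed.

Lemma vopp_scal u : vopp u = vscal (-1) u.
Proof.
  apply (vadd_cancel_r _ _ u). rewrite vadd_comm, vadd_opp.
  rewrite <- (vscal_1 V u) at 2. rewrite <- vscal_distr_s.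
  replace (-1 + 1) with 0 by ring. symmetry; apply vscal_0.
Qed.

Lemma vscal_0_r (a : R) : vscal a (@vzero V) = vzero.
Proof.
  rewrite <- (vscal_0 (@vzero V)). rewrite vscal_assoc, Rmult_0_r. reflexivity.
Qed.

Lemma vadd_swap a b c d : vadd (vadd a b) (vadd c d) = vadd (vadd a c) (vadd b d).
Proof.
  rewrite <- !vadd_assoc. f_equal. rewrite !vadd_assoc. f_equal. apply vadd_comm.
Qed.

Lemma sub_scal u v : vsub u v = vadd u (vscal (-1) v).
Proof. unfold vsub; rewrite vopp_scal; reflexivity. Qed.

Lemma scal_sub (c : R) u v : vscal c (vsub u v) = vsub (vscal c u) (vscal c v).
Proof. rewrite !sub_scal, vscal_distr_v, !vscal_assoc, Rmult_comm. reflexivity. Qed.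

Lemma add_sub u v p q : vadd (vsub u v) (vsub p q) = vsub (vadd u p) (vadd v q).
Proof. rewrite !sub_scal, (vscal_distr_v _ _ v q). apply vadd_swap. Qed.

Lemma sub_eq0 u v : vsub u v = vzero -> u = v.
Proof.
  intro H. rewrite <- (vadd_0_l v), <- H. unfold vsub.
  rewrite <- vadd_assoc, (vadd_comm _ (vopp v) v), vadd_opp, vadd_0. reflexivity.
Qed.

Lemma vsub_self u : vsub u u = vzero.
Proof. apply vadd_opp. Qed.

Lemma vsum_ext {A} (l : list A) (F F' : A -> V) :
  (forall s, In s l -> F s = F' s) -> vsum l F = vsum l F'.
Proof.
  induction l; intros H; simpl; auto.
  rewrite H by (left; auto). rewrite IHl; auto. intros; apply H; right; auto.
Qed.

Lemma vsum_add {A} (l : list A) (F F' : A -> V) :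
  vsum l (fun s => vadd (F s) (F' s)) = vadd (vsum l F) (vsum l F').
Proof.
  induction l; simpl. symmetry; apply vadd_0.
  rewrite IHl. apply vadd_swap.
Qed.

Lemma vsum_sub {A} (l : list A) (F F' : A -> V) :
  vsum l (fun s => vsub (F s) (F' s)) = vsub (vsum l F) (vsum l F').
Proof.
  induction l; simpl. symmetry; apply vsub_self.
  rewrite IHl. apply add_sub.
Qed.

Lemma vsum_const {A} (l : list A) b :
  vsum l (fun _ => b) = vscal (INR (length l)) b.
Proof.
  induction l; simpl. symmetry; apply vscal_0.
  rewrite IHl. rewrite <- (vscal_1 V b) at 1. rewrite <- vscal_distr_s.
  destruct (length l); simpl; f_equal; ring.
Qed.

Lemma inner_add_r u v w : inner u (vadd v w) = inner u v + inner u w.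
Proof. rewrite inner_sym, inner_add_l, (inner_sym _ v), (inner_sym _ w). reflexivity. Qed.

Lemma inner_scal_r (a : R) u v : inner u (vscal a v) = a * inner u v.
Proof. rewrite inner_sym, inner_scal_l, inner_sym. reflexivity. Qed.

Lemma inner_0_l v : inner (@vzero V) v = 0.
Proof. rewrite <- (vscal_0 (@vzero V)), inner_scal_l. ring. Qed.

Lemma inner_sub_sq a b :
  inner (vsub a b) (vsub a b) = inner a a - 2 * inner a b + inner b b.
Proof.
  rewrite sub_scal, inner_add_l, !inner_add_r, !inner_scal_l, !inner_scal_r, (inner_sym _ b a).
  ring.
Qed.

Definition rsum {A} (l : list A) (F : A -> R) : R := fold_right (fun s acc => F s + acc) 0 l.

Lemma inner_vsum_l {A} (l : list A) (F : A -> V) w :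
  inner (vsum l F) w = rsum l (fun s => inner (F s) w).
Proof.
  induction l; simpl. apply inner_0_l. rewrite inner_add_l, IHl. reflexivity.
Qed.

Lemma lin_zero (L : V -> V) : is_linear L -> L vzero = vzero.
Proof.
  intros [H1 H2]. rewrite <- (vscal_0 (@vzero V)). rewrite H2. rewrite !vscal_0. reflexivity.
Qed.

Lemma lin_vsum {A} (L : V -> V) (l : list A) F :
  is_linear L -> L (vsum l F) = vsum l (fun s => L (F s)).
Proof.
  intros HL; induction l; simpl. apply lin_zero; auto.
  destruct HL as [H1 H2]. rewrite H1, IHl. reflexivity.
Qed.

Lemma lin_sub (L : V -> V) u v : is_linear L -> L (vsub u v) = vsub (L u) (L v).
Proof. intros [H1 H2]. rewrite !sub_scal, H1, H2. reflexivity. Qed.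

Lemma sub_addr p q b : vsub (vadd p b) (vadd q b) = vsub p q.
Proof. rewrite <- add_sub, vsub_self, vadd_0. reflexivity. Qed.

End Vec.

Lemma rsum_ext {A} (l : list A) F F' : (forall s, In s l -> F s = F' s) -> rsum l F = rsum l F'.
Proof.
  induction l; intros H; simpl; auto.
  rewrite H by (left; auto). rewrite IHl; auto. intros; apply H; right; auto.
Qed.

Lemma rsum_cons {A} (a : A) l F : rsum (a :: l) F = F a + rsum l F.
Proof. reflexivity. Qed.

Lemma rsum_sq {A} (l : list A) p q c :
  rsum l (fun s => p s - 2 * q s + c) = rsum l p - 2 * rsum l q + INR (length l) * c.
Proof. induction l. simpl; ring. rewrite !rsum_cons, IHl. change (length (a::l)) with (S (length l)); rewrite S_INR. ring. Qed.

Lemma rsum_nonneg {A} (l : list A) F : (forall s, In s l -> 0 <= F s) -> 0 <= rsum l F.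
Proof.
  induction l; intros H; simpl. lra.
  assert (0 <= F a) by (apply H; left; auto).
  assert (0 <= rsum l F) by (apply IHl; intros; apply H; right; auto). lra.
Qed.

Lemma rsum_le {A} (l : list A) F m : (forall s, In s l -> F s <= m) -> rsum l F <= INR (length l) * m.
Proof.
  induction l; intros H. simpl; lra. rewrite rsum_cons.
  assert (F a <= m) by (apply H; left; auto).
  assert (rsum l F <= INR (length l) * m) by (apply IHl; intros; apply H; right; auto).
  change (length (a::l)) with (S (length l)); rewrite S_INR. lra.
Qed.

Lemma rsum_zero {A} (l : list A) F : (forall s, In s l -> 0 <= F s) -> rsum l F = 0 ->
  forall s, In s l -> F s = 0.
Proof.
  induction l; intros H H0 s Hs; simpl in *. contradiction.
  assert (0 <= F a) by (apply H; left; auto).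
  assert (0 <= rsum l F) by (apply rsum_nonneg; intros; apply H; right; auto).
  destruct Hs as [<-|Hs]. lra.
  apply IHl; [intros; apply H; right; auto | lra | auto].
Qed.

Lemma norm_sq (V : HilbertSpace) (u : V) : inner u u = hnorm u * hnorm u.
Proof. unfold hnorm. rewrite sqrt_sqrt; auto. apply inner_pos. Qed.

Lemma hnorm_pos (V : HilbertSpace) (u : V) : 0 <= hnorm u.
Proof. apply sqrt_pos. Qed.

Lemma core (V : HilbertSpace) {A} (l : list A) (a : A -> V) (a0 : V) (M : R) :
  INR (length l) > 0 -> (forall s, In s l -> hnorm (a s) <= M) -> hnorm a0 <= M ->
  hnorm (vscal (1/2) (vadd (vscal (1 / INR (length l)) (vsum l a)) a0)) <= M /\
  (hnorm (vscal (1/2) (vadd (vscal (1 / INR (length l)) (vsum l a)) a0)) = M ->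
    (forall s, In s l -> a s = vscal (1/2) (vadd (vscal (1 / INR (length l)) (vsum l a)) a0))
    /\ a0 = vscal (1/2) (vadd (vscal (1 / INR (length l)) (vsum l a)) a0)).
Proof.
  intros Hn Ha Ha0.
  remember (vscal (1/2) (vadd (vscal (1 / INR (length l)) (vsum l a)) a0)) as w eqn:Hw.
  set (n := INR (length l)) in *.
  assert (HM : 0 <= M) by (pose proof (hnorm_pos _ a0); lra).
  assert (Hww : inner w w = 1/2 * (1/n * rsum l (fun s => inner (a s) w) + inner a0 w)).
  { rewrite Hw at 1. rewrite inner_scal_l, inner_add_l, inner_scal_l, inner_vsum_l. reflexivity. }
  set (Q := rsum l (fun s => inner (a s) w)) in *.
  set (E := rsum l (fun s => inner (vsub (a s) w) (vsub (a s) w))).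
  set (S1 := rsum l (fun s => inner (a s) (a s))).
  assert (HE : E = S1 - 2 * Q + n * inner w w).
  { unfold E, S1, Q, n. rewrite <- rsum_sq. apply rsum_ext. intros; apply inner_sub_sq. }
  pose proof (inner_sub_sq _ a0 w) as He0.
  set (k := 1 / (2 * n)).
  assert (Hid : k * E + 1/2 * inner (vsub a0 w) (vsub a0 w)
                = k * S1 + 1/2 * inner a0 a0 - inner w w).
  { rewrite He0, HE. unfold k. rewrite Hww. field. lra. }
  assert (HE0 : 0 <= E) by (apply rsum_nonneg; intros; apply inner_pos).
  assert (He00 : 0 <= inner (vsub a0 w) (vsub a0 w)) by apply inner_pos.
  assert (HS1 : S1 <= n * (M * M)).
  { apply rsum_le. intros s Hs. rewrite norm_sq. specialize (Ha s Hs).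
    pose proof (hnorm_pos _ (a s)). apply Rmult_le_compat; auto. }
  assert (Hk : 0 < k) by (unfold k; apply Rdiv_lt_0_compat; lra).
  assert (HkS : k * S1 <= k * (n * (M * M))) by (apply Rmult_le_compat_l; lra).
  assert (Hkn : k * (n * (M * M)) = (M * M) / 2) by (unfold k; field; lra).
  assert (HkE : 0 <= k * E) by (apply Rmult_le_pos; lra).
  assert (Ha00 : inner a0 a0 <= M * M).
  { rewrite norm_sq. pose proof (hnorm_pos _ a0). apply Rmult_le_compat; auto. }
  assert (Hwle : inner w w <= M * M) by lra.
  split.
  - unfold hnorm. rewrite <- (sqrt_square M HM). apply sqrt_le_1_alt; auto.
  - intros Heq. assert (Hww2 : inner w w = M * M) by (rewrite norm_sq, Heq; auto).
    assert (HkE0 : k * E = 0) by lra.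
    assert (HE00 : E = 0).
    { destruct (Rmult_integral _ _ HkE0); auto. lra. }
    split.
    + intros s Hs. apply sub_eq0. apply inner_def.
      apply (rsum_zero l (fun s => inner (vsub (a s) w) (vsub (a s) w))); auto.
      intros; apply inner_pos.
    + apply sub_eq0. apply inner_def. lra.
Qed.

Lemma hop_sub {G} (mul : G -> G -> G) S (V : HilbertSpace) (f g : G -> V) x :
  Hop mul S (fun y => vsub (f y) (g y)) x = vsub (Hop mul S f x) (Hop mul S g x).
Proof.
  unfold Hop. rewrite (vsum_sub V S (fun s => f (mul x s)) (fun s => g (mul x s))).
  rewrite scal_sub, add_sub, scal_sub. reflexivity.
Qed.

Lemma lap_hop {G} (mul : G -> G -> G) S (V : HilbertSpace) (f : G -> V) x :
  Lap mul S (Hop mul S f) x = Hop mul S (Lap mul S f) x.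
Proof. unfold Lap at 1 2. rewrite hop_sub. reflexivity. Qed.

Lemma hop_aff {G} (mul : G -> G -> G) S (V : HilbertSpace) (f : G -> V) (L : V -> V) b x :
  INR (length S) <> 0 -> is_linear L ->
  Hop mul S (fun y => vadd (L (f y)) b) x = vadd (L (Hop mul S f x)) b.
Proof.
  intros Hn HL. pose proof HL as [H1 H2]. unfold Hop.
  rewrite (vsum_add V S (fun s => L (f (mul x s))) (fun _ => b)), vsum_const.
  rewrite H2, H1, H2, lin_vsum by auto.
  rewrite (vscal_distr_v _ (1 / INR (length S))), vscal_assoc.
  replace (1 / INR (length S) * INR (length S)) with 1 by (field; auto).
  rewrite vscal_1. rewrite vadd_swap, vscal_distr_v. f_equal.
  rewrite <- (vscal_1 V b) at 1 2. rewrite <- vscal_distr_s, vscal_assoc.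
  replace (1/2 * (1+1)) with 1 by field. apply vscal_1.
Qed.

Lemma lap_aff {G} (mul : G -> G -> G) S (V : HilbertSpace) (f : G -> V) (L : V -> V) b x :
  INR (length S) <> 0 -> is_linear L ->
  Lap mul S (fun y => vadd (L (f y)) b) x = L (Lap mul S f x).
Proof.
  intros Hn HL. unfold Lap. rewrite hop_aff by auto. rewrite sub_addr, lin_sub by auto.
  reflexivity.
Qed.

Lemma max_nbhd_self {G} (mul : G -> G -> G) S g x : g x <= max_nbhd mul S g x.
Proof.
  unfold max_nbhd; induction S; simpl. lra. eapply Rle_trans; [apply IHS|apply Rmax_r].
Qed.

Lemma max_nbhd_in {G} (mul : G -> G -> G) S g x s : In s S -> g (mul x s) <= max_nbhd mul S g x.
Proof.
  unfold max_nbhd; induction S; simpl. tauto.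
  intros [<-|H]. apply Rmax_l. eapply Rle_trans; [apply IHS; auto|apply Rmax_r].
Qed.

Theorem mainTheorem3 (G : Type) (mul : G -> G -> G) (inv : G -> G) (e : G)
  (S : list G) (V : HilbertSpace) (rho : G -> V -> V) (f : G -> V) :
  is_group mul inv e ->
  fin_sym_gen_set mul inv e S ->
  is_affine_action mul e rho ->
  equivariant mul rho f ->
  (forall x : G,
     hnorm (Lap mul S (Hop mul S f) x)
       <= max_nbhd mul S (fun y => hnorm (Lap mul S f y)) x) /\
  ((exists x : G,
     hnorm (Lap mul S (Hop mul S f) x)
       = max_nbhd mul S (fun y => hnorm (Lap mul S f y)) x) ->
   exists c : V, forall x : G, Lap mul S f x = c).
Proof.
  intros [Hassoc [He1 [He2 [Hinv1 Hinv2]]]] [_ [Hne [_ Hgen]]] [Haff [_ _]] Heq.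
  assert (Hn : INR (length S) > 0).
  { destruct S as [|s S']. contradiction. apply lt_0_INR. simpl. apply Nat.lt_0_succ. }
  set (D := Lap mul S f).
  assert (Hcore : forall x, let M := max_nbhd mul S (fun y => hnorm (D y)) x in
     hnorm (Lap mul S (Hop mul S f) x) <= M /\
     (hnorm (Lap mul S (Hop mul S f) x) = M ->
       (forall s, In s S -> D (mul x s) = D x))).
  { intros x M. rewrite lap_hop. fold D. unfold Hop.
    destruct (core V S (fun s => D (mul x s)) (D x) M Hn) as [H1 H2].
    - intros s Hs. apply (max_nbhd_in mul S (fun y => hnorm (D y))); auto.
    - apply (max_nbhd_self mul S (fun y => hnorm (D y))).
    - split; auto. intros Hq s Hs. destruct (H2 Hq) as [H3 H4].
      rewrite (H3 s Hs). auto. }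
  split.
  - intros x. apply (Hcore x).
  - intros [x0 Hx0]. pose proof (proj2 (Hcore x0) Hx0) as Hloc.
    assert (HDeq : forall g, exists L, is_linear L /\ forall y, D (mul g y) = L (D y)).
    { intros g. destruct (Haff g) as [L [b [HL Hb]]]. exists L. split; auto.
      intros y. unfold D.
      transitivity (Lap mul S (fun z => vadd (L (f z)) b) y).
      - replace (fun z => vadd (L (f z)) b) with (fun z => f (mul g z)).
        + unfold Lap, Hop. cbv beta.
          rewrite (vsum_ext V S (fun s => f (mul (mul g y) s)) (fun s => f (mul g (mul y s)))).
          reflexivity. intros; rewrite Hassoc; reflexivity.
        + apply functional_extensionality. intros z. rewrite Heq, Hb. reflexivity.
      - apply lap_aff; auto. lra. }
    assert (Hall : forall y s, In s S -> D (mul y s) = D y).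
    { intros y s Hs. set (g := mul y (inv x0)).
      assert (Hy : mul g x0 = y) by (unfold g; rewrite <- Hassoc, Hinv2, He2; reflexivity).
      destruct (HDeq g) as [L [HL HD]].
      rewrite <- Hy, <- Hassoc, !HD, Hloc; auto. }
    assert (HQ : forall h y, D (mul y h) = D y).
    { apply (Hgen (fun h => forall y, D (mul y h) = D y)).
      - intros y; rewrite He2; reflexivity.
      - intros a c Ha Hc y. rewrite Hassoc, Hc, Ha. reflexivity.
      - intros a Ha y. rewrite <- (Ha (mul y (inv a))), <- Hassoc, Hinv2, He2. reflexivity.
      - intros s Hs y. apply Hall; auto. }
    exists (D e). intros x. fold D. rewrite <- (He1 x) at 1. apply HQ.
Qed.
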